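(* For every $\beta>0$, the origin is the unique equilibrium of the ODE $\dot x=f(x)$ on $\mathbb R^n\times\mathbb R^n$, $$f(x_1,x_2)=\begin{bmatrix}-(1+\beta)Dx_1+\beta Dx_2+\gamma DP\big(M(x_2+Q^* )-M(Q^* )\big)\\ -(1+\beta)Dx_2+\beta Dx_1+\gamma DP\big(M(x_1+Q^* )-M(Q^* )\big)\end{bmatrix},$$ and every solution converges to the origin as $t\to\infty$. Equivalently, every solution of $\dot Q^A=DR+\gamma DPM(Q^B)-(1+\beta)DQ^A+\beta DQ^B$, $\dot Q^B=DR+\gamma DPM(Q^A)-(1+\beta)DQ^B+\beta DQ^A$ satisfies $(Q^A(t),Q^B(t))\to(Q^*,Q^* )$.
   Context: Finite MDP with states $\mathcal S$, actions $\mathcal A$, kernel $P$, expected reward vector $R\in\mathbb R^n$, discount $\gamma\in[0,1)$; $n=|\mathcal S||\mathcal A|$. $D$ is the diagonal matrix of a probability distribution $d$ on $\mathcal S\times\mathcal A$ with $d(s,a)>0$; $P$ is the $n\times|\mathcal S|$ matrix with row $(s,a)$ equal to $P(\cdot\mid s,a)$; $M(Q)(s)=\max_aQ(s,a)$; $Q^*=R+\gamma PM(Q^* )$ is the optimal Q-function. *)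

(* Defs.v *)
From HB Require Import structures.
From mathcomp Require Import all_boot all_order all_algebra.
From mathcomp Require Import all_classical all_reals all_analysis.
Set Implicit Arguments. Unset Strict Implicit. Unset Printing Implicit Defensive.
Import Order.TTheory GRing.Theory Num.Theory.
Import numFieldNormedType.Exports.
Local Open Scope ring_scope.

Section MDP.
Variables (R : realType) (S A : finType).

(* Q-functions are vectors indexed by S x A (so n = |S||A|). *)
Definition qvec := S * A -> R.

Definition is_kernel (P : S -> A -> S -> R) : Prop :=
  (forall s a t, 0 <= P s a t) /\ (forall s a, \sum_(t : S) P s a t = 1).

Definition is_pos_distr (d : S * A -> R) : Prop :=
  (forall sa, 0 < d sa) /\ \sum_(sa : S * A) d sa = 1.

(* M(Q)(s) = max_a Q(s,a)  (a0 : A only witnesses that A is nonempty;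
   the value does not depend on it). *)
Definition Mx (a0 : A) (Q : qvec) (s : S) : R :=
  \big[Num.max/Q (s, a0)]_(a : A) Q (s, a).

Definition Pmul (P : S -> A -> S -> R) (v : S -> R) : qvec :=
  fun sa => \sum_(t : S) P sa.1 sa.2 t * v t.

Definition is_Qstar a0 (P : S -> A -> S -> R) (Rw : qvec) (gamma : R) (Qs : qvec) :=
  forall sa, Qs sa = Rw sa + gamma * Pmul P (Mx a0 Qs) sa.

(* first block of f(x1,x2); the second block is fblock x2 x1 *)
Definition fblock a0 (P : S -> A -> S -> R) (d : S * A -> R) (gamma beta : R)
  (Qs : qvec) (x1 x2 : qvec) : qvec :=
  fun sa => - (1 + beta) * (d sa * x1 sa) + beta * (d sa * x2 sa)
    + gamma * (d sa * Pmul P (fun s => Mx a0 (fun p => x2 p + Qs p) s - Mx a0 Qs s) sa).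

Definition gblock a0 (P : S -> A -> S -> R) (Rw : qvec) (d : S * A -> R) (gamma beta : R)
  (QA QB : qvec) : qvec :=
  fun sa => d sa * Rw sa + gamma * (d sa * Pmul P (Mx a0 QB) sa)
    - (1 + beta) * (d sa * QA sa) + beta * (d sa * QB sa).

End MDP.

(* Main.v *)
Require Import Defs.
From HB Require Import structures.
From mathcomp Require Import all_boot all_order all_algebra.
From mathcomp Require Import all_classical all_reals all_analysis.
From mathcomp Require Import ring lra.
Import Order.TTheory GRing.Theory Num.Theory.
Import numFieldNormedType.Exports.
Local Open Scope classical_set_scope.
Local Open Scope ring_scope.

Section S.
Variable R : realType.
Lemma nearR (P : R -> Prop) x : (\forall u \near x, P u) ->
  exists2 e : R, 0 < e & forall u, `|x - u| < e -> P u.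
Proof.
move=> /nbhs_ballP [e e0 he]; exists e => // u hu; exact: he.
Qed.
Lemma nearR0 (P : R -> Prop) : (\forall u \near 0^', P u) ->
  exists2 e : R, 0 < e & forall u, `|u| < e -> u != 0 -> P u.
Proof.
move=> /nbhs_ballP [e e0 he]; exists e => // u hu u0; apply: he => //.
by rewrite /ball /= sub0r normrN.
Qed.
Lemma derq (f : R -> R) (x l : R) : is_derive x 1 f l ->
  (fun h => h^-1 * (f (x + h) - f x)) @ 0^' --> l.
Proof.
move=> [df <-].
have := df.
rewrite /derivable => /cvg_ex [l' Hl].
rewrite /derive (cvg_lim _ Hl) //.
have -> : (fun h => h^-1 * (f (x + h) - f x)) =
  (fun h => h^-1 *: ((f \o shift x) (h *: 1) - f x)).
  by apply/funext => h /=; rewrite [h *: 1]mulr1 (addrC h x).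
exact: Hl.
Qed.

Lemma der_cont (f : R -> R) (x l : R) : is_derive x 1 f l -> f @ x --> f x.
Proof. by move=> [df _]; exact/differentiable_continuous/derivable1_diffP. Qed.

Lemma barrier (I : finType) (y y' : I -> R -> R) (t0 : R) :
 (forall t, t0 <= t -> forall i, is_derive t 1 (y i) (y' i t)) ->
 (forall i, y i t0 < 0) ->
 (forall t i, t0 < t -> (forall j, y j t <= 0) -> y i t = 0 -> y' i t < 0) ->
 forall t, t0 <= t -> forall i, y i t < 0.
Proof.
move=> dy y0 hy T t0T.
have [//|] := pselect (forall i, y i T < 0).
move=> /existsNP [iT yT]; exfalso.
have {}yT : 0 <= y iT T by rewrite leNgt; apply/negP.
have cont : forall t, t0 <= t -> forall j, y j @ t --> y j t.
  by move=> t tt j; apply: der_cont; apply: dy.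
pose E := [set s | t0 <= s <= T /\ forall u, t0 <= u <= s -> forall j, y j u < 0].
have E0 : E t0.
  split; first by rewrite lexx t0T.
  by move=> u /andP[h1 h2] j; have -> : u = t0 by apply/le_anti; rewrite h1 h2.
have hsE : has_sup E by split; [exists t0 | exists T => s [/andP[_ ->]]].
set ts := sup E.
have t0ts : t0 <= ts := sup_upper_bound hsE E0.
have tsT : ts <= T by apply: ge_sup; [exists t0 | move=> s [/andP[_ ->]]].
have h3 : forall u, t0 <= u -> u < ts -> forall j, y j u < 0.
  move=> u tu uts j.
  have tsu : 0 < ts - u by rewrite subr_gt0.
  have [e [_ Ee] ue] := sup_adherent tsu hsE.
  apply: Ee => //; rewrite tu /=; apply: ltW; move: ue; rewrite /ts; lra.
have h4 : forall j, y j ts <= 0.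
  move=> j; rewrite leNgt; apply/negP => yj.
  have [e e0 he] := @nearR _ _ (cvgr_gt _ (cont ts t0ts j) _ yj).
  move: t0ts; rewrite le_eqVlt => /orP[/eqP t0E|t0lt].
    by move: (y0 j); rewrite t0E; lra.
  pose m := Num.min e (ts - t0).
  have m0 : 0 < m by rewrite lt_min e0 subr_gt0.
  have me : m <= e by rewrite ge_min lexx.
  have mt : m <= ts - t0 by rewrite ge_min lexx orbT.
  have := he (ts - m / 2).
  have := h3 (ts - m / 2).
  have -> : ts - (ts - m / 2) = m / 2 by lra.
  rewrite ger0_norm; last by lra.
  move=> H1 H2; have := H1 _ _ j; have := H2 _; lra.
have [i0 yi0] : exists i, y i ts = 0.
  apply/not_existsP => hneg.
  have hn : forall j, y j ts < 0.
    by move=> j; rewrite lt_neqAle h4 andbT; apply/eqP; apply: hneg.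
  have tsT' : ts < T.
    by rewrite lt_neqAle tsT andbT; apply/eqP => tE; move: (hn iT); rewrite tE; lra.
  have [e e0 he] := @nearR _ _
    (filter_forall _ (fun j => cvgr_lt _ (cont ts t0ts j) _ (hn j))).
  pose s := Num.min T (ts + e / 2).
  have sT : s <= T by rewrite ge_min lexx.
  have se : s <= ts + e / 2 by rewrite ge_min lexx orbT.
  have ss : ts < s by rewrite lt_min tsT'; lra.
  have Es : E s.
    split; first by apply/andP; split => //; lra.
    move=> u /andP[tu us] j.
    have [uts|tsu] := ltP u ts; first exact: h3.
    apply: he; rewrite distrC ger0_norm; lra.
  by have := sup_upper_bound hsE Es; rewrite -/ts; lra.
have t0ts' : t0 < ts.
  by rewrite lt_neqAle t0ts andbT; apply/eqP => tE; move: (y0 i0); rewrite tE; lra.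
have hyi := hy ts i0 t0ts' h4 yi0.
have [e e0 he] := @nearR0 _
  (cvgr_lt _ (@derq _ _ _ (dy ts t0ts i0) : _ --> y' i0 ts) _ hyi).
pose m := Num.min e (ts - t0).
have m0 : 0 < m by rewrite lt_min e0 subr_gt0.
have me : m <= e by rewrite ge_min lexx.
have mt : m <= ts - t0 by rewrite ge_min lexx orbT.
have := he (- (m / 2)).
rewrite normrN ger0_norm; last by lra.
move=> /(_ ltac:(lra)); rewrite oppr_eq0 => /(_ ltac:(lra)).
rewrite yi0 subr0 => hq.
have : 0 < y i0 (ts + - (m / 2)).
  move: hq; rewrite invrN mulNr oppr_lt0 pmulr_rgt0 //.
  by rewrite invr_gt0; lra.
have := h3 (ts + - (m / 2)) ltac:(lra) ltac:(lra) i0.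
lra.
Qed.
Lemma m_deriv (K c t : R) :
  is_derive t 1 (fun u => K * expR (- (c * u))) (- c * (K * expR (- (c * t)))).
Proof.
have h1 : is_derive t 1 (fun u : R => - (c * u)) (- c).
  have H := is_deriveN (is_deriveZ c (is_derive_id t 1)).
  rewrite [c *: 1]mulr1 in H.
  exact: H.
have h2 : is_derive t 1 (expR \o (fun u : R => - (c * u))) (expR (- (c * t)) * - c).
  by apply: is_derive1_comp.
have H := is_deriveZ K h2.
have -> : - c * (K * expR (- (c * t))) = K *: (expR (- (c * t)) * - c).
  by rewrite /GRing.scale /=; ring.
exact: H.
Qed.

Lemma m_cvg (K c : R) : 0 < c ->
  (fun u => K * expR (- (c * u))) @ +oo --> 0.
Proof.
move=> c0.
have h : (fun u : R => c * u) @ +oo --> +oo.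
  apply/cvgryPge => B; near=> u.
  have hu : B / c <= u by near: u; apply: nbhs_pinfty_ge; exact: num_real.
  have := ler_wpM2l (ltW c0) hu.
  by rewrite mulrCA divff ?mulr1 // gt_eqF.
have h2 : (fun u => expR (- (c * u))) @ +oo --> (0 : R).
  exact: (cvg_comp _ _ h (@cvgr_expR R)).
rewrite -(mulr0 K).
exact: cvgMl_tmp.
Unshelve. all: end_near.
Qed.
End S.
Section T.
Variables (R : realType) (S A : finType) (a0 : A).

Lemma Mx_le (F G : S * A -> R) s B : (forall a, F (s,a) <= G (s,a) + B) ->
  Mx a0 F s <= Mx a0 G s + B.
Proof.
move=> H; rewrite /Mx; apply: bigmax_le => [|a _];
  (apply: le_trans (H _) _; rewrite lerD2r; exact: le_bigmax).
Qed.

Lemma Mx_diff (x Q : S * A -> R) s B : (forall a, `|x (s,a)| <= B) ->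
  `|Mx a0 (fun p => x p + Q p) s - Mx a0 Q s| <= B.
Proof.
move=> H; rewrite ler_norml; apply/andP; split.
  have : Mx a0 Q s <= Mx a0 (fun p => x p + Q p) s + B.
    by apply: Mx_le => a; have := H a; rewrite ler_norml => /andP[h1 h2]; lra.
  lra.
have : Mx a0 (fun p => x p + Q p) s <= Mx a0 Q s + B.
  by apply: Mx_le => a; have := H a; rewrite ler_norml => /andP[h1 h2]; lra.
lra.
Qed.

Lemma Pmul_bound (P : S -> A -> S -> R) (v : S -> R) sa B : is_kernel P ->
  (forall t, `|v t| <= B) -> `|Pmul P v sa| <= B.
Proof.
move=> [P0 P1] H; rewrite /Pmul.
apply: le_trans (ler_norm_sum _ _ _) _.
apply: le_trans (_ : \sum_t P sa.1 sa.2 t * B <= B).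
  apply: ler_sum => t _; rewrite normrM ger0_norm //.
  exact: ler_wpM2l.
by rewrite -mulr_suml P1 mul1r.
Qed.

Lemma fblock_bound (P : S -> A -> S -> R) (d : S * A -> R) (gamma beta : R) (Qs : S * A -> R)
  (x1 x2 : S * A -> R) sa (B sg : R) :
  is_kernel P -> 0 <= gamma -> 0 <= beta -> 0 <= d sa ->
  (sg = 1 \/ sg = -1) -> (forall p, `|x2 p| <= B) -> sg * x1 sa = B ->
  sg * fblock a0 P d gamma beta Qs x1 x2 sa <= - (d sa * (1 - gamma) * B).
Proof.
move=> hP g0 b0 d0 hsg hx2 hx1.
have hPm := Pmul_bound _ _ sa _ hP
  (fun s => Mx_diff _ Qs s _ (fun a => hx2 (s, a))).
set pm := Pmul _ _ _ in hPm.
have h2 := hx2 sa.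
rewrite /fblock -/pm.
move: hPm h2; rewrite !ler_norml => /andP[p1 p2] /andP[q1 q2].
have e : sg * (- (1 + beta) * (d sa * x1 sa) + beta * (d sa * x2 sa)
  + gamma * (d sa * pm)) = d sa * (- (1 + beta) * B + sg * (beta * x2 sa + gamma * pm)).
  by rewrite -hx1; ring.
rewrite e.
have hb : sg * (beta * x2 sa + gamma * pm) <= beta * B + gamma * B.
  case: hsg => ->; rewrite ?mul1r ?mulN1r.
    by apply: lerD; apply: ler_wpM2l.
  rewrite opprD; apply: lerD; rewrite -mulrN; apply: ler_wpM2l => //; lra.
have : d sa * (- (1 + beta) * B + sg * (beta * x2 sa + gamma * pm)) <=
       d sa * (- (1 + beta) * B + (beta * B + gamma * B)).
  by apply: ler_wpM2l => //; lra.
move=> h; apply: le_trans h _; rewrite le_eqVlt; apply/orP; left; apply/eqP; ring.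
Qed.
End T.

Lemma part2 (R : realType) (S A : finType) (a0 : A) (P : S -> A -> S -> R)
  (gamma : R) (d : S * A -> R) (Qs : S * A -> R) (beta : R) :
  is_kernel P -> 0 <= gamma -> gamma < 1 -> is_pos_distr d -> 0 < beta ->
  forall x1 x2 : R -> S * A -> R,
     (forall t : R, 0 < t -> forall sa,
        is_derive t 1 (fun u => x1 u sa) (fblock a0 P d gamma beta Qs (x1 t) (x2 t) sa) /\
        is_derive t 1 (fun u => x2 u sa) (fblock a0 P d gamma beta Qs (x2 t) (x1 t) sa)) ->
     forall sa, ((fun t : R => x1 t sa) @ +oo%R --> (0 : R)) /\ ((fun t : R => x2 t sa) @ +oo%R --> (0 : R)).
Proof.
move=> hP g0 g1 [d0 _] b0 x1 x2 hx sa0.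
pose dmin := \big[Num.min/d sa0]_p d p.
have dmin0 : 0 < dmin by apply: lt_bigmin => // p _; exact: d0.
have dminle : forall p, dmin <= d p by move=> p; exact: bigmin_le.
pose c := dmin * (1 - gamma) / 2.
have c0 : 0 < c by rewrite /c; apply: divr_gt0 => //; apply: mulr_gt0 => //; lra.
have cd : forall p, c < d p * (1 - gamma).
  move=> p; have := ler_wpM2r (_ : 0 <= 1 - gamma) (dminle p).
  have := mulr_gt0 dmin0 (_ : 0 < 1 - gamma).
  rewrite /c; lra.
pose I := (bool * bool * (S * A))%type.
pose z (i : I) t := if i.1.2 then - (if i.1.1 then x2 t i.2 else x1 t i.2)
  else (if i.1.1 then x2 t i.2 else x1 t i.2).
pose F (i : I) t := if i.1.2 then
    - (if i.1.1 then fblock a0 P d gamma beta Qs (x2 t) (x1 t) i.2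
       else fblock a0 P d gamma beta Qs (x1 t) (x2 t) i.2)
  else (if i.1.1 then fblock a0 P d gamma beta Qs (x2 t) (x1 t) i.2
       else fblock a0 P d gamma beta Qs (x1 t) (x2 t) i.2).
pose Sm := \sum_(i : I) `|z i 1|.
have Sm0 : 0 <= Sm by apply: sumr_ge0 => i _.
pose K := (1 + Sm) * expR c.
pose m t := K * expR (- (c * t)).
have mpos : forall t, 0 < m t.
  move=> t; rewrite /m /K; apply: mulr_gt0; last exact: expR_gt0.
  by apply: mulr_gt0; [lra | exact: expR_gt0].
have m1 : m 1 = 1 + Sm.
  by rewrite /m /K mulr1 -mulrA -expRD addrN expR0 mulr1.
pose y (i : I) t := z i t - m t.
pose y' (i : I) t := F i t - (- c * m t).
have bar : forall t, 1 <= t -> forall i, y i t < 0.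
  apply: (@barrier R I y y' 1).
  - move=> t t1 [[b1 b2] p].
    have [h1 h2] := hx t ltac:(lra) p.
    have D1 : is_derive t 1 (z (b1, b2, p)) (F (b1, b2, p) t).
      by case: b1 b2 => [] []; rewrite /z /F /=;
        [exact: is_deriveN h2 | exact: h2 | exact: is_deriveN h1 | exact: h1].
    have H := is_deriveB D1 (@m_deriv R K c t); exact H.
  - move=> i; rewrite /y m1.
    have : z i 1 <= Sm.
      apply: le_trans (ler_norm _) _.
      by rewrite /Sm (bigD1 i) //= lerDl; apply: sumr_ge0.
    lra.
  - move=> t [[b1 b2] p] t1 hall hi.
    have hb : forall (b : bool) q, `|(if b then x2 t q else x1 t q)| <= m t.
      move=> b q; have := hall (b, false, q); have := hall (b, true, q).
      rewrite /y /z /= ler_norml; lra.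
    have key : forall (sg : R) (w o : S * A -> R), (sg = 1 \/ sg = -1) ->
        (forall q, `|o q| <= m t) -> sg * w p = m t ->
        sg * fblock a0 P d gamma beta Qs w o p + c * m t < 0.
      move=> sg w o hsg ho hw.
      have := @fblock_bound _ _ _ a0 _ _ _ _ Qs _ _ _ _ _ hP g0 (ltW b0) (ltW (d0 p)) hsg ho hw.
      have hdc : 0 < d p * (1 - gamma) - c by have := cd p; lra.
      have := mulr_gt0 hdc (mpos t).
      lra.
    move: hi; rewrite /y /y' /z /F /=.
    case: b1 b2 => [] [] /= hi.
    + have := key (-1) (x2 t) (x1 t) (or_intror erefl) (hb false) ltac:(lra); lra.
    + have := key 1 (x2 t) (x1 t) (or_introl erefl) (hb false) ltac:(lra); lra.
    + have := key (-1) (x1 t) (x2 t) (or_intror erefl) (hb true) ltac:(lra); lra.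
    + have := key 1 (x1 t) (x2 t) (or_introl erefl) (hb true) ltac:(lra); lra.
have fin : forall b : bool, (fun t => if b then x2 t sa0 else x1 t sa0) @ +oo --> (0 : R).
  move=> b.
  apply: (@squeeze_cvgr _ _ _ _ (fun t => - m t) m).
  - near=> t.
    have t1 : 1 <= t by near: t; apply: nbhs_pinfty_ge; exact: num_real.
    have := bar t t1 (b, false, sa0); have := bar t t1 (b, true, sa0).
    rewrite /y /z /=; lra.
  - rewrite -oppr0; apply: cvgN; exact: m_cvg.
  - exact: m_cvg.
split; [exact: (fin false) | exact: (fin true)].
Unshelve. all: end_near.
Qed.

Lemma Pmul_sub (R : realType) (S A : finType) (P : S -> A -> S -> R) (f g : S -> R) sa :
  Pmul P (fun s => f s - g s) sa = Pmul P f sa - Pmul P g sa.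
Proof. by rewrite /Pmul -sumrB; apply: eq_bigr => t _; rewrite mulrBr. Qed.

Theorem mainTheorem19 (R : realType) (S A : finType) (a0 : A)
  (P : S -> A -> S -> R) (Rw : S * A -> R) (gamma : R) (d : S * A -> R)
  (Qs : S * A -> R) (beta : R) :
  is_kernel P -> 0 <= gamma -> gamma < 1 -> is_pos_distr d ->
  is_Qstar a0 P Rw gamma Qs -> 0 < beta ->
  (* the origin is the unique equilibrium of xdot = f(x) *)
  (forall x1 x2 : S * A -> R,
     (fblock a0 P d gamma beta Qs x1 x2 = (fun=> 0) /\
      fblock a0 P d gamma beta Qs x2 x1 = (fun=> 0))
     <-> (x1 = (fun=> 0) /\ x2 = (fun=> 0))) /\
  (* every solution (on t > 0) converges to the origin *)
  (forall x1 x2 : R -> S * A -> R,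
     (forall t : R, 0 < t -> forall sa,
        is_derive t 1 (fun u => x1 u sa) (fblock a0 P d gamma beta Qs (x1 t) (x2 t) sa) /\
        is_derive t 1 (fun u => x2 u sa) (fblock a0 P d gamma beta Qs (x2 t) (x1 t) sa)) ->
     forall sa, ((fun t : R => x1 t sa) @ +oo%R --> (0 : R)) /\ ((fun t : R => x2 t sa) @ +oo%R --> (0 : R))) /\
  (* equivalently, for the (Q^A, Q^B) system *)
  (forall QA QB : R -> S * A -> R,
     (forall t : R, 0 < t -> forall sa,
        is_derive t 1 (fun u => QA u sa) (gblock a0 P Rw d gamma beta (QA t) (QB t) sa) /\
        is_derive t 1 (fun u => QB u sa) (gblock a0 P Rw d gamma beta (QB t) (QA t) sa)) ->
     forall sa, ((fun t : R => QA t sa) @ +oo%R --> (Qs sa : R)) /\ ((fun t : R => QB t sa) @ +oo%R --> (Qs sa : R))).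
Proof.
move=> hP g0 g1 hd hQ b0.
have p2 := @part2 _ _ _ a0 _ _ _ Qs _ hP g0 g1 hd b0.
split; [|split => //].
- move=> x1 x2; split.
  + move=> [e1 e2].
    have hc := p2 (fun _ => x1) (fun _ => x2).
    have hder : forall t : R, 0 < t -> forall sa,
        is_derive t 1 (fun u => (fun _ : R => x1) u sa)
          (fblock a0 P d gamma beta Qs ((fun _ : R => x1) t) ((fun _ : R => x2) t) sa) /\
        is_derive t 1 (fun u => (fun _ : R => x2) u sa)
          (fblock a0 P d gamma beta Qs ((fun _ : R => x2) t) ((fun _ : R => x1) t) sa).
      move=> t _ sa; split.
      * have -> : fblock a0 P d gamma beta Qs x1 x2 sa = 0.
          exact: (congr1 (fun f => f sa) e1).
        have H := @is_derive_cst _ _ _ (x1 sa) t 1; exact H.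
      * have -> : fblock a0 P d gamma beta Qs x2 x1 sa = 0.
          exact: (congr1 (fun f => f sa) e2).
        have H := @is_derive_cst _ _ _ (x2 sa) t 1; exact H.
    split; apply/funext => sa; have [h1 h2] := hc hder sa.
    * by have := cvg_lim (@Rhausdorff R) h1; rewrite lim_cst //; apply; exact: proper_pinfty_nbhs.
    * by have := cvg_lim (@Rhausdorff R) h2; rewrite lim_cst //; apply; exact: proper_pinfty_nbhs.
  + move=> [-> ->]; split; apply/funext => sa;
    rewrite /fblock /Pmul;
    (have -> : (fun p => (fun=> (0:R)) p + Qs p) = Qs by apply/funext => p; rewrite add0r);
    (rewrite big1; last by move=> t _; rewrite subrr mulr0); ring.
- move=> QA QB hQAB sa.
  pose x1 t p := QA t p - Qs p.
  pose x2 t p := QB t p - Qs p.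
  have eA : forall t, (fun p => x2 t p + Qs p) = QB t by move=> t; apply/funext => p; rewrite /x2 subrK.
  have eB : forall t, (fun p => x1 t p + Qs p) = QA t by move=> t; apply/funext => p; rewrite /x1 subrK.
  have hg : forall (U V : S * A -> R) (X Y : S * A -> R) q,
      (fun p => Y p + Qs p) = V -> (forall p, X p = U p - Qs p) ->
      gblock a0 P Rw d gamma beta U V q - 0 = fblock a0 P d gamma beta Qs X Y q.
    move=> U V X Y q eY eX.
    have eV : V q = Y q + Qs q by rewrite -eY.
    have eR : Rw q = Qs q - gamma * Pmul P (Mx a0 Qs) q by rewrite [Qs q](hQ q); ring.
    rewrite /gblock /fblock eY eX Pmul_sub eV eR; ring.
  have := p2 x1 x2.
  have hder : forall t : R, 0 < t -> forall sa,
        is_derive t 1 (fun u => x1 u sa) (fblock a0 P d gamma beta Qs (x1 t) (x2 t) sa) /\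
        is_derive t 1 (fun u => x2 u sa) (fblock a0 P d gamma beta Qs (x2 t) (x1 t) sa).
    move=> t t0 q; have [hA hB] := hQAB t t0 q; split.
    * have H := is_deriveB hA (@is_derive_cst _ _ _ (Qs q) t 1).
      rewrite (hg (QA t) (QB t) (x1 t) (x2 t) q (eA t) (fun p => erefl)) in H.
      exact H.
    * have H := is_deriveB hB (@is_derive_cst _ _ _ (Qs q) t 1).
      rewrite (hg (QB t) (QA t) (x2 t) (x1 t) q (eB t) (fun p => erefl)) in H.
      exact H.
  move=> /(_ hder sa) [c1 c2]; split.
  + have H := cvgD c1 (cvg_cst (Qs sa)); rewrite add0r in H.
    have -> : (fun t => QA t sa) = (fun t => x1 t sa + Qs sa) by apply/funext => t; rewrite /x1 subrK.
    by apply: H; exact: (@filter_filter R _ proper_pinfty_nbhs).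
  + have H := cvgD c2 (cvg_cst (Qs sa)); rewrite add0r in H.
    have -> : (fun t => QB t sa) = (fun t => x2 t sa + Qs sa) by apply/funext => t; rewrite /x2 subrK.
    by apply: H; exact: (@filter_filter R _ proper_pinfty_nbhs).
Qed.
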